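(* Let $D$ be an instance all of whose tuples are endogenous ($D^n=D$), let $\mathcal{Q}$ be a monotone query, and let $\bar a\in\mathcal{Q}(D)$. A tuple $t$ is a view-conditioned cause for $\bar a$ if and only if there is $D'\subseteq D$ with $t\in(D\smallsetminus D')\subseteq D^n$ and $\mathcal{Q}(D')=\mathcal{Q}(D)\smallsetminus\{\bar a\}$.
   Context: A query $\mathcal{Q}$ is monotone if $D_1\subseteq D_2$ implies $\mathcal{Q}(D_1)\subseteq\mathcal{Q}(D_2)$; $D\models\mathcal{Q}(\bar b)$ means $\bar b\in\mathcal{Q}(D)$. Let $\mathcal{Q}(D)=\{\bar a_1,\dots,\bar a_n\}$ with $\bar a=\bar a_k$. A tuple $\tau\in D^n$ is a view-conditioned counterfactual cause for $\bar a_k$ in an instance $D''$ if $D''\smallsetminus\{\tau\}\not\models\mathcal{Q}(\bar a_k)$ and $D''\smallsetminus\{\tau\}\models\mathcal{Q}(\bar a_i)$ for all $i\neq k$. $\tau$ is a view-conditioned cause for $\bar a_k$ if there is $\Gamma\subseteq D^n$ such that $\tau$ is a view-conditioned counterfactual cause for $\bar a_k$ in $D\smallsetminus\Gamma$. A subinstance $D'\subseteq D$ with $\mathcal{Q}(D')=\mathcal{Q}(D)\smallsetminus\{\bar a\}$ is called a solution to the view side-effect-free problem for $\bar a$. *)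

(* Defs.v *)
From HB Require Import structures.
From mathcomp Require Import all_boot.
From mathcomp Require Import finmap.
Set Implicit Arguments. Unset Strict Implicit. Unset Printing Implicit Defensive.
Local Open Scope fset_scope.

(* Tuples of type T, answers of type A; an instance is a finite set of tuples.
   A query maps instances to (finite) sets of answer tuples. *)
Definition monotone_query (T A : choiceType) (Q : {fset T} -> {fset A}) : Prop :=
  forall D1 D2 : {fset T}, D1 `<=` D2 -> Q D1 `<=` Q D2.

Definition models (T A : choiceType) (Q : {fset T} -> {fset A}) (D : {fset T}) (b : A) : Prop :=
  b \in Q D.

Definition vc_counterfactual_cause (T A : choiceType) (Q : {fset T} -> {fset A})
    (D Dn : {fset T}) (a : A) (D'' : {fset T}) (tau : T) : Prop :=
  tau \in Dn /\
  ~ models Q (D'' `\ tau) a /\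
  (forall b, b \in Q D -> b != a -> models Q (D'' `\ tau) b).

Definition vc_cause (T A : choiceType) (Q : {fset T} -> {fset A})
    (D Dn : {fset T}) (a : A) (tau : T) : Prop :=
  exists Gamma : {fset T}, Gamma `<=` Dn /\
    vc_counterfactual_cause Q D Dn a (D `\` Gamma) tau.

(* Main.v *)
Require Import Defs.
From HB Require Import structures.
From mathcomp Require Import all_boot.
From mathcomp Require Import finmap.
Local Open Scope fset_scope.

Theorem proposition12 (T A : choiceType) (Q : {fset T} -> {fset A})
    (D Dn : {fset T}) (a : A) (t : T) :
  Dn = D -> monotone_query Q -> a \in Q D ->
  (vc_cause Q D Dn a t <->
   exists D' : {fset T}, D' `<=` D /\ t \in D `\` D' /\ D `\` D' `<=` Dn /\
     Q D' = Q D `\ a).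
Proof.
move=> -> mon aQ; split.
- move=> [G [GD [tD [na hb]]]].
  exists (D `\` G `\ t); split; first by apply/fsubsetP => x; rewrite !inE => /and3P[].
  split; first by rewrite !inE eqxx /= tD.
  split; first exact: fsubsetDl.
  apply/fsetP => b; rewrite !inE.
  case: (boolP (b == a)) => [/eqP -> | nb] /=.
    by apply/negP => H; apply: na; exact H.
  apply/idP/idP.
    move=> H; apply: (fsubsetP (mon _ _ _)) H.
    by apply/fsubsetP => x; rewrite !inE => /and3P[].
  by move=> H; exact: hb.
- move=> [D' [sD [tDD' [_ QD']]]].
  move: tDD'; rewrite !inE => /andP[ntD' tD].
  exists ((D `\` D') `\ t); split; first by apply/fsubsetP => x; rewrite !inE => /and3P[].
  have E : D `\` (D `\` D' `\ t) `\ t = D'.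
    apply/fsetP => x; rewrite !inE.
    case: (boolP (x == t)) => [/eqP -> | nxt] /=; first by rewrite (negbTE ntD').
    case: (boolP (x \in D')) => xD' /=; last first. idtac.
    by case: (x \in D).
    by rewrite (fsubsetP sD _ xD').
  rewrite /vc_counterfactual_cause /models E QD' !inE eqxx /=; split => //.
  split => // b bQ nb; rewrite !inE; apply/andP; split=> //; apply/negP => /eqP E1; move: nb; rewrite E1 eqxx.
Qed.
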